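(* Let $m\ge 2$ be a prime and $n\ge 1$ an integer. If $p(m,n)\neq 0$, then $n \equiv r \pmod{m^2}$ for some $r\in\{-1,0,1,\dots,m-2\}$.
   Context: For integers $m\ge 2$, $n\ge 1$, a valid $(m,n)$-sequence is a sequence $(a_1,\dots,a_{mn})$ with entries in $\{1,\dots,n\}$ in which each $k\in\{1,\dots,n\}$ occurs exactly $m$ times, and such that any two consecutive occurrences of $k$ are separated by exactly $k$ other terms; equivalently, there is an index $\theta_k$ such that $k$ occurs exactly at the positions $\theta_k,\ \theta_k+(k+1),\ \theta_k+2(k+1),\dots,\theta_k+(m-1)(k+1)$ (all in $\{1,\dots,mn\}$). Example: $3\,1\,2\,1\,3\,2$ is a valid $(2,3)$-sequence. The reversal $(a_{mn},\dots,a_1)$ of a valid sequence is again valid; $p(m,n)$ denotes the number of valid $(m,n)$-sequences counted up to reversal (i.e. the number of equivalence classes of valid $(m,n)$-sequences under identifying a sequence with its reversal). *)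

(* Defs.v *)
From mathcomp Require Import all_boot all_order all_algebra.
Set Implicit Arguments. Unset Strict Implicit. Unset Printing Implicit Defensive.

(* A sequence (a_1,...,a_{mn}) is represented by s : seq nat with a_i = nth 0 s (i-1). *)
Definition valid_seq (m n : nat) (s : seq nat) : bool :=
  [&& size s == m * n,
      all (fun x => (1 <= x <= n)%N) s,
      [forall k : 'I_n.+1, (1 <= k)%N ==> (count_mem (k : nat) s == m)] &
      [forall k : 'I_n.+1, (1 <= k)%N ==>
         [exists th : 'I_(m * n).+1,
            (1 <= th)%N &&
            [forall j : 'I_m,
               ((th + j * k.+1 <= m * n)%N) &&
               (nth 0 s (th + j * k.+1).-1 == k)]]]].

(* Valid sequences, as tuples with entries in {0..n} (entries are forced to be in {1..n}). *)
Definition valid_tuples (m n : nat) : {set (m * n).-tuple 'I_n.+1} :=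
  [set t | valid_seq m n (map (@nat_of_ord _) (tval t))].

Definition p (m n : nat) : nat :=
  #|[set [set u in valid_tuples m n |
              (map (@nat_of_ord _) (tval u) == map (@nat_of_ord _) (tval t))
           || (map (@nat_of_ord _) (tval u) == rev (map (@nat_of_ord _) (tval t)))]
     | t in valid_tuples m n]|.

(* Main.v *)
Require Import Defs.
From mathcomp Require Import all_boot all_order all_algebra.

Lemma sum_ord_eq0 (m : nat) : 0 < m -> \sum_(i < m) ((i : nat) == 0) = 1.
Proof.
case: m => // m _; rewrite big_ord_recl /= big1 // => i _.
Qed.

Lemma cnt_res (m a b : nat) : prime m -> ~~ (m %| b) ->
  \sum_(j < m) (m %| a + j * b) = 1.
Proof.
move=> pm nb; have m0 : 0 < m by apply: prime_gt0.
have cop : coprime m b by rewrite prime_coprime.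
pose f (j : 'I_m) : 'I_m := Ordinal (ltn_pmod (a + j * b) m0).
have finj : injective f.
  have key : forall j j' : 'I_m, j <= j' -> f j = f j' -> j = j'.
    move=> j j' le /(congr1 val) /= /eqP.
    rewrite eq_sym eqn_modDl eqn_mod_dvd; last by rewrite leq_mul2r le orbT.
    rewrite -mulnBl Gauss_dvdl //.
    case: (posnP (j' - j)) => [/eqP|pos].
      by rewrite subn_eq0 => le2 _; apply/val_inj/eqP; rewrite eqn_leq le le2.
    move=> /(dvdn_leq pos) h; exfalso.
    have := ltn_ord j'; have := leq_subr j j'; move=> h1 h2.
    by move: (leq_trans h (leq_subr j j')); rewrite leqNgt ltn_ord.
  move=> j j' e; case: (leqP j j') => le; first exact: key.
  by symmetry; apply: key (ltnW le) (esym e).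
transitivity (\sum_(j < m) ((f j : nat) == 0)).
  by apply: eq_bigr => j _ /=.
rewrite -(@sum_ord_eq0 m m0); symmetry.
exact: (reindex_inj finj (P := xpredT) (F := fun i : 'I_m => ((i : nat) == 0) : nat)).
Qed.

Lemma cnt_res0 (m a b : nat) : m %| b ->
  \sum_(j < m) (m %| a + j * b) = m * (m %| a).
Proof.
move=> db; rewrite (eq_bigr (fun _ => (m %| a):nat)); last first.
  by move=> j _; rewrite dvdn_addl // dvdn_mull.
by rewrite sum_nat_const card_ord.
Qed.

Lemma cnt_mult (m q : nat) : 0 < m -> \sum_(i < q) (m %| i.+1) = q %/ m.
Proof.
move=> m0; elim: q => [|q IH]; first by rewrite big_ord0 div0n.
by rewrite big_ord_recr /= IH divnS // addnC.
Qed.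

Lemma cnt_mult0 (m n : nat) : 0 < m -> \sum_(i < m * n) (m %| i) = n.
Proof.
move=> m0; case: n => [|n]; first by rewrite muln0 big_ord0.
have e : m * n.+1 = (m * n.+1).-1.+1 by rewrite prednK // muln_gt0 m0.
rewrite e big_ord_recl /= dvdn0.
rewrite (eq_bigr (fun i : 'I_(m * n.+1).-1 => (m %| i.+1) : nat)) //.
rewrite cnt_mult // mulnSr -subn1 -addnBA // mulnC divnMDl //.
rewrite (divn_small (m := m - 1)) ?addn0 ?addn1 //.
by rewrite subn1 prednK.
Qed.

Lemma card_set_nat (q : nat) (P : pred nat) :
  #|[set i : 'I_q | P i]| = \sum_(i < q) P i.
Proof.
rewrite cardsE -sum1_card big_mkcond /=; apply: eq_bigr => i _.
by rewrite unfold_in; case: (P i).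
Qed.

Lemma count_nth_sum (s : seq nat) (x : nat) :
  count_mem x s = \sum_(i < size s) (nth 0 s i == x).
Proof.
rewrite -sum1_count (big_nth 0) big_mkcond big_mkord /=.
by apply: eq_bigr => i _; case: (_ == _).
Qed.

Lemma per_k (N m x b th : nat) (s : seq nat) : size s = N -> 0 < b -> 1 <= th ->
  count_mem x s = m ->
  (forall j : 'I_m, (th + j * b <= N) && (nth 0 s (th + j * b).-1 == x)) ->
  \sum_(i < N) (m %| i) * (nth 0 s i == x) = \sum_(j < m) (m %| th.-1 + j * b).
Proof.
move=> sz b0 th1 cnt H.
have hlt : forall j : 'I_m, th.-1 + j * b < N.
  move=> j; case/andP: (H j) => h _.
  by rewrite -(ltn_add2r 1) !addn1 -addSn prednK.
have hval : forall j : 'I_m, nth 0 s (th.-1 + j * b) == x.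
  move=> j; case/andP: (H j) => _ h.
  by move: h; rewrite -(prednK th1) addSn.
pose F (j : 'I_m) : 'I_N := Ordinal (hlt j).
have Finj : injective F.
  move=> j j' /(congr1 val) /= /eqP; rewrite eqn_add2l eqn_mul2r.
  rewrite (gtn_eqF b0) /= => /eqP; exact: val_inj.
pose Sk := [set i : 'I_N | nth 0 s i == x].
have eS : F @: setT = Sk.
  apply/eqP; rewrite eqEcard; apply/andP; split.
    apply/subsetP => i /imsetP [j _ ->]; rewrite inE; exact: hval.
  rewrite card_imset // cardsT card_ord (card_set_nat _ (fun i => nth 0 s i == x)) -cnt -sz count_nth_sum.
  by rewrite sz.
transitivity (\sum_(i in Sk) (m %| i)).
  rewrite [RHS]big_mkcond /=; apply: eq_bigr => i _; rewrite inE.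
  by case: (_ == _); rewrite ?muln1 ?muln0.
rewrite -eS big_imset /=; last by move=> ? ? _ _; apply: Finj.
by apply: eq_bigl => j; rewrite inE.
Qed.

Lemma sum_eq1 (n v : nat) : 1 <= v <= n -> \sum_(k < n) (v == k.+1) = 1.
Proof.
case/andP=> v1 vn.
have hl : v.-1 < n by rewrite prednK.
rewrite (bigD1 (Ordinal hl)) //= prednK // eqxx big1 // => k /eqP nk.
apply/eqP; rewrite eqb0; apply/eqP => e; apply: nk; apply: val_inj => /=.
by rewrite e.
Qed.

Lemma main_div (m n : nat) (s : seq nat) : prime m -> valid_seq m n s ->
  m %| n.+1 %/ m.
Proof.
move=> pm V; have m0 : 0 < m by apply: prime_gt0.
case/and4P: V => /eqP sz /allP allv /forallP cntf /forallP exf.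
pose c (k : 'I_n) := \sum_(i < m * n) (m %| i) * (nth 0 s i == k.+1).
have eA : n = \sum_(k < n) c k.
  rewrite /c exchange_big /= -{1}(@cnt_mult0 m n m0); apply: eq_bigr => i _.
  rewrite -big_distrr /= sum_eq1 ?muln1 //; apply: allv.
  by apply: mem_nth; rewrite sz.
have eB : forall k : 'I_n, c k = ~~ (m %| k.+2) %[mod m].
  move=> k; have kn : k.+1 < n.+1 by rewrite ltnS.
  have := cntf (inord k.+1); have := exf (inord k.+1).
  rewrite !inordK // /= => /existsP [th /andP [th1 /forallP Hj]] /eqP cnt.
  rewrite /c (@per_k (m * n) m k.+1 k.+2 th s sz _ th1 cnt Hj) //.
  case: (boolP (m %| k.+2)) => dk.
    by rewrite cnt_res0 // mulnC modnMl mod0n.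
  by rewrite cnt_res.
have eC : n = \sum_(k < n) (~~ (m %| k.+2) : nat) + \sum_(k < n) (m %| k.+2).
  rewrite -big_split /= -{1}(card_ord n) -sum1_card; apply: eq_bigr => k _.
  by case: (m %| k.+2).
have eD : \sum_(k < n) (m %| k.+2) = n.+1 %/ m.
  rewrite -cnt_mult // big_ord_recl /= dvdn1 (gtn_eqF (prime_gt1 pm)).
  by apply: eq_bigr.
rewrite -eD /dvdn; apply/eqP.
have : n = \sum_(k < n) (~~ (m %| k.+2) : nat) %[mod m].
  by rewrite {1}eA -modn_summ (eq_bigr _ (fun k _ => eB k)) modn_summ.
rewrite {1}eC -{2}(addn0 (\sum_(k < n) (~~ (m %| k.+2) : nat))) => /eqP.
by rewrite eqn_modDl mod0n => /eqP.
Qed.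

Import GRing.Theory Num.Theory.
Local Open Scope ring_scope.

Theorem theorem1 (m n : nat) (hm : prime m) (hn : (1 <= n)%N) :
  p m n <> 0%N ->
  exists r : int, (-1 <= r) /\ (r <= (m%:Z - 2)) /\
    (n%:Z = r %[mod (m ^ 2)%N%:Z])%Z.
Proof.
move=> pn.
have [t tV] : exists t, t \in valid_tuples m n.
  case: (pickP [in valid_tuples m n]) => [t0 t0V|H]; first by exists t0.
  exfalso; apply: pn; rewrite /p; apply/eqP; rewrite cards_eq0; apply/eqP/setP => X.
  rewrite inE; apply/imsetP => [[u uV _]]; by move: (H u); rewrite /= uV.
have V : valid_seq m n (map (@nat_of_ord _) (tval t)) by move: tV; rewrite inE.
have := @main_div m n _ hm V => /dvdnP [q eq].
have m0 : (0 < m)%N by apply: prime_gt0.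
set rr := (n.+1 %% m)%N.
have ltr : (rr < m)%N by rewrite ltn_pmod.
exists (rr%:Z - 1); split; [|split].
- by rewrite lerBrDr addrC subrr.
- rewrite (_ : rr%:Z - 1 = rr%:Z + 1 - 2); last by rewrite -addrA.
  by rewrite lerD2r -PoszD addn1 lez_nat.
have en : n.+1 = (q * m ^ 2 + rr)%N by rewrite {1}(divn_eq n.+1 m) eq -mulnA.
have ez : n%:Z = (q%:Z) * (m ^ 2)%N%:Z + (rr%:Z - 1).
  rewrite addrA -PoszM -PoszD -en -addn1 PoszD addrK //.
by rewrite ez modzMDl.
Qed.
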